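(* Let $X$ be a mixed-stable sequence with respect to a full BST $T$. For every leaf $u$ of $T$ there are non-negative integers $a(u),b(u)$ such that the queries to $u$ occur exactly once every $2^{a(u)}3^{b(u)}$ consecutive queries of $X$. Consequently, the length of the atomic sequence of $X$ is $$2^{\max_u a(u)}\cdot 3^{\max_u b(u)},$$ the maxima being over leaves $u$. Moreover, if $X$ is strongly-stable then $b(u)=0$ for all leaves $u$, and if $X$ is weakly-stable then $a(u)=0$ for all leaves $u$.
   Context: Stable sequences. Let $T$ be a full binary search tree (every inner node has exactly two children), and let $X$ be a query sequence consisting only of keys stored at leaves of $T$. For an inner node $v$, let $X_v$ be the subsequence of $X$ consisting of the queries to keys in the subtree of $v$. - The node $v$ is strongly-stable if consecutive queries of $X_v$ alternate between the left and right subtrees of $v$. - The node $v$ is weakly-stable with a left bias if its left child $u$ is an inner node and $X_v$ repeats cyclically (from some starting phase) the pattern: a query in the left subtree of $u$, then one in the right subtree of $u$, then one in the right subtree of $v$. - Weakly-stable with a right bias is the mirror image: $u$ is the right child of $v$, and the pattern is right subtree of $u$, left subtree of $u$, left subtree of $v$. In both weakly-stable cases $u$ is called the favored child of $v$. $X$ (and $T$) is mixed-stable if every inner node of $T$ is strongly-stable or weakly-stable. It is strongly-stable if every inner node is strongly-stable, and weakly-stable if exactly half of the inner nodes are weakly-stable. Given $T$, the stability type of each inner node, and the subtree each node's pattern starts with, the stable sequence is determined up to its length. Its atomic sequence is the shortest such sequence all of whose repetitions are again such stable sequences. *)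

(* Defs.v *)
From Stdlib Require List.
From mathcomp Require Import all_boot.
Set Implicit Arguments. Unset Strict Implicit. Unset Printing Implicit Defensive.

Inductive bst : Type :=
| Leaf of nat
| Node of bst & bst.

Fixpoint leaves (t : bst) : seq nat :=
  match t with
  | Leaf k => [:: k]
  | Node l r => leaves l ++ leaves r
  end.

(* the inner nodes of t, each represented by the subtree rooted at it
   (preorder); for a search tree (distinct keys) distinct nodes give
   distinct subtrees *)
Fixpoint inner (t : bst) : seq bst :=
  match t with
  | Leaf _ => [::]
  | Node l r => t :: (inner l ++ inner r)
  end.

Definition is_bst (t : bst) : Prop := sorted ltn (leaves t).

Definition qseq := nat -> nat.

(* i < j are consecutive positions of the subsequence X_A of X
   consisting of the queries to keys in A *)
Definition consec (A : seq nat) (X : qseq) (i j : nat) : Prop :=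
  [/\ i < j, X i \in A, X j \in A & forall k, i < k < j -> X k \notin A].

Definition strongly_stable_node (X : qseq) (v : bst) : Prop :=
  match v with
  | Leaf _ => False
  | Node l r => forall i j, consec (leaves v) X i j ->
      (X i \in leaves l) != (X j \in leaves l)
  end.

(* weakly-stable with a left bias: left child u = Node ul ur is inner and
   X_v repeats cyclically (from some phase) the pattern
   ul-query, ur-query, r-query. *)
Definition weak_left_node (X : qseq) (v : bst) : Prop :=
  match v with
  | Node (Node ul ur) r =>
      let c x := if x \in leaves ul then 0 else if x \in leaves ur then 1 else 2 in
      forall i j, consec (leaves v) X i j -> c (X j) = (c (X i)).+1 %% 3
  | _ => False
  end.

Definition weak_right_node (X : qseq) (v : bst) : Prop :=
  match v with
  | Node l (Node ul ur) =>
      let c x := if x \in leaves ur then 0 else if x \in leaves ul then 1 else 2 in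
      forall i j, consec (leaves v) X i j -> c (X j) = (c (X i)).+1 %% 3
  | _ => False
  end.

Definition weakly_stable_node (X : qseq) (v : bst) : Prop :=
  weak_left_node X v \/ weak_right_node X v.

Definition queries_leaves (T : bst) (X : qseq) : Prop :=
  forall i, X i \in leaves T.

Definition mixed_stable (T : bst) (X : qseq) : Prop :=
  queries_leaves T X /\
  forall v, List.In v (inner T) -> strongly_stable_node X v \/ weakly_stable_node X v.

Definition strongly_stable (T : bst) (X : qseq) : Prop :=
  queries_leaves T X /\ forall v, List.In v (inner T) -> strongly_stable_node X v.

Definition num_weakly_stable (T : bst) (X : qseq) (n : nat) : Prop :=
  exists m : bitseq,
    [/\ size m = size (inner T),
        forall i, i < size m ->
          (nth false m i <-> weakly_stable_node X (nth (Leaf 0) (inner T) i))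
      & count id m = n].

Definition weakly_stable (T : bst) (X : qseq) : Prop :=
  mixed_stable T X /\
  exists n, num_weakly_stable T X n /\ n.*2 = size (inner T).

Definition occurs_once_every (X : qseq) (u p : nat) : Prop :=
  forall i, count (fun k => X k == u) (iota i p) = 1.

Definition is_period (X : qseq) (p : nat) : Prop :=
  0 < p /\ forall i, X (i + p) = X i.

(* length of the atomic sequence: the shortest block whose repetitions
   give back the (infinite) stable sequence, i.e. its least period *)
Definition atomic_length (X : qseq) (n : nat) : Prop :=
  is_period X n /\ forall m, is_period X m -> n <= m.

(* Main.v *)
Require Import Defs.
From mathcomp Require Import all_boot.
From mathcomp Require Import zify.
From Stdlib Require Import ClassicalEpsilon.
Set Implicit Arguments. Unset Strict Implicit.

Definition APs (X : qseq) (A : seq nat) (o p : nat) : Prop :=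
  forall i, X i \in A <-> exists k, i = o + k * p.

Definition cls (A0 A1 : seq nat) (x : nat) : nat :=
  if x \in A0 then 0 else if x \in A1 then 1 else 2.

Lemma cls_lt3 A0 A1 x : cls A0 A1 x < 3.
Proof. by rewrite /cls; case: (x \in A0) => //; case: (x \in A1). Qed.

Lemma disjR (s1 s2 : seq nat) x : uniq (s1 ++ s2) -> x \in s2 -> x \notin s1.
Proof. by rewrite cat_uniq => /and3P[_ /hasPn h _]; apply: h. Qed.

Lemma disjL (s1 s2 : seq nat) x : uniq (s1 ++ s2) -> x \in s1 -> x \notin s2.
Proof. by rewrite uniq_catC; apply: disjR. Qed.

Lemma consec_gen X V A o p k d :
  0 < p -> APs X V o p -> (forall x, x \in A -> x \in V) ->
  X (o + k*p) \in A -> X (o + (k+d)*p) \in A -> 0 < d ->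
  (forall j, k < j < k + d -> X (o + j*p) \notin A) ->
  consec A X (o + k*p) (o + (k+d)*p).
Proof.
move=> p0 hV hAV hi hj d0 hb; split => //; first by nia.
move=> m /andP[h1 h2]; apply/negP => hm.
have [j ej] := (hV m).1 (hAV _ hm); subst m.
have hkj : k < j < k + d by apply/andP; split; nia.
by move: (hb j hkj); rewrite hm.
Qed.

Lemma consec1 X V o p k : 0 < p -> APs X V o p ->
  consec V X (o + k*p) (o + (k+1)*p).
Proof.
move=> p0 hV; apply: consec_gen => //.
- by apply (hV _).2; exists k.
- by apply (hV _).2; exists (k+1).
- by move=> j; lia.
Qed.

Lemma ap_sub X V B o p m e : 0 < p -> e < m -> APs X V o p ->
  (forall x, x \in B -> x \in V) ->
  (forall k, (X (o + k*p) \in B) = (k %% m == e)) -> APs X B (o + e*p) (p*m).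
Proof.
move=> p0 em hV hBV hk i; split.
- move=> hi; have [k ek] := (hV i).1 (hBV _ hi); subst i.
  move: hi; rewrite hk => /eqP hke; exists (k %/ m).
  rewrite {1}(divn_eq k m) hke; lia.
- move=> [j ->].
  have : X (o + (e + j*m)*p) \in B by rewrite hk addnC modnMDl modn_small.
  by have -> : o + (e + j * m) * p = o + e * p + j * (p * m) by lia.
Qed.

Lemma mod_shift m d k t : 0 < m -> t < m ->
  ((d + k) %% m == t) = (k %% m == (t + (m - d %% m)) %% m).
Proof.
move=> m0 tm.
have e1 : ((d + k) %% m == t) = (d + k == t %[mod m]) by rewrite (modn_small tm).
have e2 : (k %% m == (t + (m - d %% m)) %% m) = (d + k == d + (t + (m - d %% m)) %[mod m])
  by rewrite eqn_modDl.
rewrite e1 e2.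
have -> : d + (t + (m - d %% m)) = d %/ m * m + (t + m).
  rewrite {1}(divn_eq d m); have := ltn_pmod d m0.
  move: (d %/ m * m) (d %% m) => x y hy; clear -hy; lia.
by rewrite modnMDl modnDr.
Qed.

Lemma split2 X (V A0 A1 : seq nat) o p : 0 < p -> o < p -> APs X V o p ->
 (forall x, x \in A0 -> x \in V) -> (forall x, x \in A1 -> x \in V) ->
 (forall x, x \in V -> (x \in A1) = (x \notin A0)) ->
 (forall i j, consec V X i j -> (X i \in A0) != (X j \in A0)) ->
 exists o0 o1, [/\ o0 < p*2, o1 < p*2, APs X A0 o0 (p*2) & APs X A1 o1 (p*2)].
Proof.
move=> p0 op hV h0 h1 h01 halt.
have inV k : X (o + k*p) \in V by apply (hV _).2; exists k.
pose s k := X (o + k*p) \in A0.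
have alt k : s k.+1 = ~~ s k.
  have := halt _ _ (consec1 k p0 hV); rewrite /s addn1.
  by case: (X (o + k * p) \in A0); case: (X (o + k.+1 * p) \in A0).
have sk k : s k = s 0 (+) odd k.
  elim: k => [|k IH]; first by rewrite addbF.
  by rewrite alt IH /= addbN.
exists (o + (if s 0 then 0 else 1) * p), (o + (if s 0 then 1 else 0) * p).
split.
- by case: (s 0); lia.
- by case: (s 0); lia.
- apply: (ap_sub p0 _ hV h0); first by case: (s 0).
  move=> k; rewrite -/(s k) sk modn2.
  by case: (s 0); case: (odd k).
- apply: (ap_sub p0 _ hV h1); first by case: (s 0).
  move=> k; rewrite (h01 _ (inV k)) -/(s k) sk modn2.
  by case: (s 0); case: (odd k).
Qed.

Lemma cl_formula X (V A0 A1 : seq nat) o p : 0 < p -> APs X V o p ->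
 (forall i j, consec V X i j -> cls A0 A1 (X j) = (cls A0 A1 (X i)).+1 %% 3) ->
 forall k, cls A0 A1 (X (o + k*p)) = (cls A0 A1 (X (o + 0*p)) + k) %% 3.
Proof.
move=> p0 hV hst; elim=> [|k IH]; first by rewrite addn0 modn_small // cls_lt3.
have := hst _ _ (consec1 k p0 hV); rewrite addn1 => ->; rewrite IH.
by rewrite -addn1 modnDml addn1 addnS.
Qed.

Lemma cls_spec (A0 A1 : seq nat) x :
  ((cls A0 A1 x == 0) = (x \in A0)) /\
  (cls A0 A1 x == 1 -> (x \notin A0) && (x \in A1)) /\
  (cls A0 A1 x == 2 = (x \notin A0) && (x \notin A1)).
Proof. by rewrite /cls; case: (x \in A0); case: (x \in A1). Qed.

Lemma excl3 w0 w1 w2 w3 : w0 < 3 -> w1 = w0.+1 %% 3 -> w2 = w1.+1 %% 3 -> w3 = w2.+1 %% 3 ->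
  (w0 == 2) != (w1 == 2) -> (w1 == 2) != (w2 == 2) -> (w2 == 2) != (w3 == 2) -> False.
Proof. by case: w0 => [|[|[|]]] // _ -> -> ->. Qed.

Lemma cls0 (A0 A1 : seq nat) x : cls A0 A1 x = 0 -> x \in A0.
Proof. by rewrite /cls; case: (x \in A0); case: (x \in A1). Qed.
Lemma cls1 (A0 A1 : seq nat) x : cls A0 A1 x = 1 -> (x \notin A0) && (x \in A1).
Proof. by rewrite /cls; case: (x \in A0); case: (x \in A1). Qed.
Lemma cls2 (A0 A1 : seq nat) x : cls A0 A1 x = 2 -> (x \notin A0) && (x \notin A1).
Proof. by rewrite /cls; case: (x \in A0); case: (x \in A1). Qed.

Lemma cl_shift X (V A0 A1 : seq nat) o p : 0 < p -> APs X V o p ->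
 (forall i j, consec V X i j -> cls A0 A1 (X j) = (cls A0 A1 (X i)).+1 %% 3) ->
 exists K, forall i, cls A0 A1 (X (o + (K + i)*p)) = i %% 3.
Proof.
move=> p0 hV hst; have hf := cl_formula p0 hV hst.
move: (cls_lt3 A0 A1 (X (o + 0*p))) (hf) => hc; clear hst hV.
move: (cls A0 A1 (X (o + 0 * p))) hc => c hc hf'.
exists (3 - c) => i; rewrite hf'.
have -> : c + (3 - c + i) = 3 + i by move: hc; clear; lia.
by rewrite modnDl.
Qed.

Lemma split3 X (V A0 A1 A2 : seq nat) o p : 0 < p -> o < p -> APs X V o p ->
 (forall x, x \in A0 -> x \in V) -> (forall x, x \in A1 -> x \in V) ->
 (forall x, x \in A2 -> x \in V) ->
 (forall x, x \in A1 -> x \notin A0) ->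
 (forall x, x \in V -> (x \in A2) = (x \notin A0) && (x \notin A1)) ->
 (forall i j, consec V X i j -> cls A0 A1 (X j) = (cls A0 A1 (X i)).+1 %% 3) ->
 exists o0 o1 o2, [/\ o0 < p*3 /\ APs X A0 o0 (p*3), o1 < p*3 /\ APs X A1 o1 (p*3)
   & o2 < p*3 /\ APs X A2 o2 (p*3)].
Proof.
move=> p0 op hV h0 h1 h2 h10 h2e hst.
have hf := cl_formula p0 hV hst.
have inV k : X (o + k*p) \in V by apply (hV _).2; exists k.
have mk : forall (B : seq nat) t, t < 3 -> (forall x, x \in B -> x \in V) ->
  (forall k, (X (o + k*p) \in B) = (cls A0 A1 (X (o + k*p)) == t)) ->
  exists o', o' < p * 3 /\ APs X B o' (p*3).
  move=> B t t3 hB hBk.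
  have he : (t + (3 - cls A0 A1 (X (o + 0 * p)) %% 3)) %% 3 < 3 by rewrite ltn_pmod.
  move: he; set e := (t + _) %% 3 => he.
  exists (o + e * p); split; first by move: op he; clear; nia.
  apply: (ap_sub p0 he hV hB) => k.
  by rewrite hBk hf mod_shift.
have h0' := mk A0 0 erefl h0 (fun k => esym (proj1 (cls_spec _ _ _))).
have h1' : exists o', o' < p * 3 /\ APs X A1 o' (p*3).
  apply: (mk A1 1 erefl h1) => k.
  case: (boolP (X (o + k * p) \in A1)) => hx.
    by rewrite /cls (negbTE (h10 _ hx)) hx.
  by apply/esym/negP => /eqP /cls1 /andP[_ ]; rewrite (negbTE hx).
have h2' : exists o', o' < p * 3 /\ APs X A2 o' (p*3).
  apply: (mk A2 2 erefl h2) => k.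
  by rewrite (h2e _ (inV k)) (proj2 (proj2 (cls_spec _ _ _))).
by case: h0' => o0 ?; case: h1' => o1 ?; case: h2' => o2 ?; exists o0, o1, o2.
Qed.

Lemma weak_not_strong X (V A0 A1 : seq nat) o p : 0 < p -> APs X V o p ->
 (forall i j, consec V X i j -> cls A0 A1 (X j) = (cls A0 A1 (X i)).+1 %% 3) ->
 (forall i j, consec V X i j -> (cls A0 A1 (X i) == 2) != (cls A0 A1 (X j) == 2)) -> False.
Proof.
move=> p0 hV hst halt; have [K hK] := cl_shift p0 hV hst.
have := halt _ _ (consec1 (K + 0) p0 hV).
by rewrite -addnA !hK.
Qed.

Lemma fav_not_weak X (V A0 A1 U : seq nat) o p (c' : nat -> nat) b : 0 < p -> APs X V o p ->
 (forall i j, consec V X i j -> cls A0 A1 (X j) = (cls A0 A1 (X i)).+1 %% 3) ->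
 (forall x, x \in A0 -> x \in V) -> (forall x, x \in A1 -> x \in V) ->
 (forall x, (x \in U) = (x \in A0) || (x \in A1)) -> (forall x, c' x < 3) ->
 (forall x, x \in U -> (c' x == 2) = b (+) (x \in A0)) ->
 (forall i j, consec U X i j -> c' (X j) = (c' (X i)).+1 %% 3) -> False.
Proof.
move=> p0 hV hst h0 h1 hU hc3 hb hst'.
have [K hK] := cl_shift p0 hV hst.
have hUV x : x \in U -> x \in V by rewrite hU => /orP[/h0|/h1].
have m0 i : i %% 3 = 0 -> (X (o + (K + i)*p) \in A0) && (X (o + (K + i)*p) \in U).
  by move=> hi; have hx := cls0 (etrans (hK i) hi); rewrite hU hx.
have m1 i : i %% 3 = 1 -> (X (o + (K + i)*p) \notin A0) && (X (o + (K + i)*p) \in U).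
  move=> hi; have /andP[hx hy] := cls1 (etrans (hK i) hi).
  by rewrite hU hx hy orbT.
have m2 i : i %% 3 = 2 -> X (o + (K + i)*p) \notin U.
  move=> hi; have /andP[hx hy] := cls2 (etrans (hK i) hi).
  by rewrite hU negb_or hx hy.
have c01 : consec U X (o + (K + 0)*p) (o + (K + 0 + 1)*p).
  apply: consec_gen => //.
  - by case/andP: (m0 0 erefl).
  - by rewrite -addnA; case/andP: (m1 1 erefl).
  - by move=> j; lia.
have c12 : consec U X (o + (K + 1)*p) (o + (K + 1 + 2)*p).
  apply: consec_gen => //.
  - by case/andP: (m1 1 erefl).
  - by rewrite -addnA; case/andP: (m0 3 erefl).
  - move=> j hj; have -> : j = K + 2 by move: hj; clear; lia.
    exact: m2.
have c23 : consec U X (o + (K + 3)*p) (o + (K + 3 + 1)*p).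
  apply: consec_gen => //.
  - by case/andP: (m0 3 erefl).
  - by rewrite -addnA; case/andP: (m1 4 erefl).
  - by move=> j; lia.
move: (hst' _ _ c01) (hst' _ _ c12) (hst' _ _ c23).
rewrite -!addnA /=.
have /andP[a0 u0] := m0 0 erefl.
have /andP[a1 u1] := m1 1 erefl.
have /andP[a3 u3] := m0 3 erefl.
have /andP[a4 u4] := m1 4 erefl.
have e3 : K + (1 + 2) = K + 3 by [].
have e4 : K + (3 + 1) = K + 4 by [].
rewrite e3 e4 => w1 w2 w3.
apply: (excl3 (hc3 _) w1 w2 w3).
- by rewrite !hb // (negbTE a1) a0; case: (b).
- by rewrite !hb // (negbTE a1) a3; case: (b).
- by rewrite !hb // (negbTE a4) a3; case: (b).
Qed.

Definition wb X (v : bst) : bool :=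
  if excluded_middle_informative (weakly_stable_node X v) then true else false.
Arguments wb : simpl never.

Lemma wbT X v : weakly_stable_node X v -> wb X v = true.
Proof. by rewrite /wb; case: excluded_middle_informative. Qed.
Lemma wbF X v : ~ weakly_stable_node X v -> wb X v = false.
Proof. by rewrite /wb; case: excluded_middle_informative. Qed.
Lemma wbP X v : wb X v = true -> weakly_stable_node X v.
Proof. by rewrite /wb; case: excluded_middle_informative. Qed.

Lemma leaves_gt0 t : 0 < size (leaves t).
Proof. by elim: t => //= l hl r hr; rewrite size_cat addn_gt0 hl. Qed.

Definition RES X T t p :=
  (count (wb X) (inner t)).*2 <= size (inner t) /\
  forall u, u \in leaves t -> exists a b o', [/\ o' < p * (2^a * 3^b),
      APs X [:: u] o' (p * (2^a * 3^b)),
      (strongly_stable T X -> b = 0) &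
      (size (inner t) = (count (wb X) (inner t)).*2 -> a = 0)].

Lemma e2 p a b : p*2*(2^a*3^b) = p*(2^a.+1*3^b).
Proof. rewrite expnS; move: (2^a) (3^b) => x y; lia. Qed.
Lemma e3 p a b : p*3*(2^a*3^b) = p*(2^a*3^b.+1).
Proof. rewrite expnS; move: (2^a) (3^b) => x y; lia. Qed.

Lemma strong_combine X T l r p : RES X T l (p*2) -> RES X T r (p*2) ->
  wb X (Node l r) = false -> RES X T (Node l r) p.
Proof.
move=> [cl hl] [cr hr] hwb; split.
  by rewrite /= hwb count_cat size_cat /=; move: cl cr; clear; lia.
move=> u; rewrite /= mem_cat => /orP[/hl|/hr] [a [b [o' [h1 h2 h3 h4]]]];
  exists a.+1, b, o'; rewrite -e2; split => //;
  rewrite /= hwb count_cat size_cat /= => he; move: cl cr he; clear; lia.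
Qed.

Lemma weakL_combine X T ul ur r p : RES X T ul (p*3) -> RES X T ur (p*3) -> RES X T r (p*3) ->
  wb X (Node (Node ul ur) r) = true -> wb X (Node ul ur) = false ->
  (strongly_stable T X -> False) -> RES X T (Node (Node ul ur) r) p.
Proof.
move=> [c1 h1] [c2 h2] [c3 h3] hw hw' hS; split.
  by rewrite /= hw hw' !count_cat !size_cat /=; move: c1 c2 c3; clear; lia.
move=> u; rewrite /= !mem_cat => /orP[/orP[/h1|/h2]|/h3] [a [b [o' [g1 g2 g3 g4]]]];
  exists a, b.+1, o'; rewrite -e3; split => //;
  try (by move/hS);
  rewrite /= hw hw' !count_cat !size_cat /= => he; apply: g4; move: c1 c2 c3 he; clear; lia.
Qed.

Lemma weakR_combine X T l ul ur p : RES X T l (p*3) -> RES X T ul (p*3) -> RES X T ur (p*3) ->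
  wb X (Node l (Node ul ur)) = true -> wb X (Node ul ur) = false ->
  (strongly_stable T X -> False) -> RES X T (Node l (Node ul ur)) p.
Proof.
move=> [c1 h1] [c2 h2] [c3 h3] hw hw' hS; split.
  by rewrite /= hw !count_cat /= hw' !count_cat !size_cat /= !size_cat; move: c1 c2 c3; clear; lia.
move=> u; rewrite /= !mem_cat => /orP[/h1|/orP[/h2|/h3]] [a [b [o' [g1 g2 g3 g4]]]];
  exists a, b.+1, o'; rewrite -e3; split => //;
  try (by move/hS);
  rewrite /= hw !count_cat /= hw' !count_cat !size_cat /= !size_cat => he; apply: g4; move: c1 c2 c3 he; clear; lia.
Qed.

Lemma fav_lemma X V o p ul ur (A0 A1 : seq nat) : 0 < p -> APs X V o p ->
 (forall i j, consec V X i j -> cls A0 A1 (X j) = (cls A0 A1 (X i)).+1 %% 3) ->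
 (forall x, x \in A0 -> x \in V) -> (forall x, x \in A1 -> x \in V) ->
 uniq (leaves ul ++ leaves ur) ->
 ((A0 = leaves ul /\ A1 = leaves ur) \/ (A0 = leaves ur /\ A1 = leaves ul)) ->
 ~ weakly_stable_node X (Node ul ur).
Proof.
move=> p0 hV hst h0 h1 huu hA.
have hU : forall x, (x \in leaves (Node ul ur)) = (x \in A0) || (x \in A1).
  by move=> x; case: hA => [[-> ->]|[-> ->]]; rewrite /= mem_cat // orbC.
case=> [hwl|hwr].
- case: ul hwl hA huu hU => // a bb hwl hA huu hU.
  case: hA => [[e0 e1]|[e0 e1]].
  + apply: (fav_not_weak (c' := cls (leaves a) (leaves bb)) (b := true) p0 hV hst h0 h1 hU) => //.
    * by move=> x; exact: cls_lt3.
    * by move=> x _; rewrite e0 (proj2 (proj2 (cls_spec _ _ _))) /= mem_cat negb_or.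
  + apply: (fav_not_weak (c' := cls (leaves a) (leaves bb)) (b := false) p0 hV hst h0 h1 hU) => //.
    * by move=> x; exact: cls_lt3.
    * move=> x hx; rewrite e0 (proj2 (proj2 (cls_spec _ _ _))) -negb_or -mem_cat /=.
      move: hx; rewrite /= mem_cat => /orP[h|h].
        by rewrite h (negbTE (disjL huu h)).
      by rewrite h (disjR huu h).
- case: ur hwr hA huu hU => // a bb hwr hA huu hU.
  case: hA => [[e0 e1]|[e0 e1]].
  + apply: (fav_not_weak (c' := cls (leaves bb) (leaves a)) (b := false) p0 hV hst h0 h1 hU) => //.
    * by move=> x; exact: cls_lt3.
    * move=> x hx; rewrite e0 (proj2 (proj2 (cls_spec _ _ _))) -negb_or orbC -mem_cat /=.
      move: hx; rewrite /= mem_cat => /orP[h|h].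
        by rewrite h (disjL huu h).
      by rewrite h (negbTE (disjR huu h)).
  + apply: (fav_not_weak (c' := cls (leaves bb) (leaves a)) (b := true) p0 hV hst h0 h1 hU) => //.
    * by move=> x; exact: cls_lt3.
    * by move=> x _; rewrite e0 (proj2 (proj2 (cls_spec _ _ _))) /= mem_cat negb_or andbC.
Qed.

Lemma rec X T : (forall v, List.In v (inner T) -> strongly_stable_node X v \/ weakly_stable_node X v) ->
  forall n t, size (leaves t) <= n -> (forall v, List.In v (inner t) -> List.In v (inner T)) ->
  uniq (leaves t) ->
  forall o p, 0 < p -> o < p -> APs X (leaves t) o p -> RES X T t p.
Proof.
move=> hms; elim=> [|n IH] t hsz hin hu o p p0 op hap.
  by move: (leaves_gt0 t) hsz; clear; lia.
case: t hsz hin hu hap => [u|l r] hsz hin hu hap.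
  split => //= x; rewrite inE => /eqP ->; exists 0, 0, o.
  by rewrite !expn0 !muln1; split.
have hvT : List.In (Node l r) (inner T) by apply: hin; left.
have hinl : forall v, List.In v (inner l) -> List.In v (inner T).
  by move=> v hv; apply: hin; right; apply: List.in_or_app; left.
have hinr : forall v, List.In v (inner r) -> List.In v (inner T).
  by move=> v hv; apply: hin; right; apply: List.in_or_app; right.
have hul : uniq (leaves l) by move: hu; rewrite /= cat_uniq => /and3P[].
have hur : uniq (leaves r) by move: hu; rewrite /= cat_uniq => /and3P[].
have gl := leaves_gt0 l; have gr := leaves_gt0 r.
have szl : size (leaves l) <= n by move: hsz; rewrite /= size_cat; move: gl gr; clear; lia.
have szr : size (leaves r) <= n by move: hsz; rewrite /= size_cat; move: gl gr; clear; lia.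
case: (classic (weakly_stable_node X (Node l r))) => hw; last first.
  have hs : strongly_stable_node X (Node l r) by case: (hms _ hvT).
  have [o0 [o1 [b0 b1 a0 a1]]] :
    exists o0 o1, [/\ o0 < p*2, o1 < p*2, APs X (leaves l) o0 (p*2) & APs X (leaves r) o1 (p*2)].
    apply: (split2 p0 op hap).
    - by move=> x hx; rewrite /= mem_cat hx.
    - by move=> x hx; rewrite /= mem_cat hx orbT.
    - move=> x; rewrite /= mem_cat => /orP[h|h].
        by rewrite h (negbTE (disjL hu h)).
      by rewrite h (disjR hu h).
    - exact: hs.
  apply: strong_combine; last exact: wbF.
    exact: (IH l szl hinl hul o0 (p*2) (ltac:(by rewrite muln_gt0 p0)) b0 a0).
  exact: (IH r szr hinr hur o1 (p*2) (ltac:(by rewrite muln_gt0 p0)) b1 a1).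
have hwT := wbT hw.
case: hw => hw.
-
  case: l hsz hin hu hap hw hinl hul gl szl hwT hvT => // ul ur hsz hin hu hap hw hinl hul gl szl hwT hvT.
  have huu := hul.
  have hul' : uniq (leaves ul) by move: hul; rewrite /= cat_uniq => /and3P[].
  have hur' : uniq (leaves ur) by move: hul; rewrite /= cat_uniq => /and3P[].
  have hinul : forall v, List.In v (inner ul) -> List.In v (inner T).
    by move=> v hv; apply: hinl; right; apply: List.in_or_app; left.
  have hinur : forall v, List.In v (inner ur) -> List.In v (inner T).
    by move=> v hv; apply: hinl; right; apply: List.in_or_app; right.
  have g1 := leaves_gt0 ul; have g2 := leaves_gt0 ur.
  have sz1 : size (leaves ul) <= n by move: szl; rewrite /= size_cat; move: g1 g2; clear; lia.
  have sz2 : size (leaves ur) <= n by move: szl; rewrite /= size_cat; move: g1 g2; clear; lia.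
  have hst : forall i j, consec (leaves (Node (Node ul ur) r)) X i j ->
      cls (leaves ul) (leaves ur) (X j) = (cls (leaves ul) (leaves ur) (X i)).+1 %% 3 := hw.
  have h0 : forall x, x \in leaves ul -> x \in leaves (Node (Node ul ur) r).
    by move=> x hx; rewrite /= !mem_cat hx.
  have h1 : forall x, x \in leaves ur -> x \in leaves (Node (Node ul ur) r).
    by move=> x hx; rewrite /= !mem_cat hx orbT.
  have h2 : forall x, x \in leaves r -> x \in leaves (Node (Node ul ur) r).
    by move=> x hx; rewrite /= !mem_cat hx !orbT.
  have h10 : forall x, x \in leaves ur -> x \notin leaves ul by move=> x; exact: disjR.
  have h2e : forall x, x \in leaves (Node (Node ul ur) r) ->
      (x \in leaves r) = (x \notin leaves ul) && (x \notin leaves ur).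
    move=> x; rewrite /= !mem_cat => /orP[/orP[h|h]|h].
    - have h' : x \in leaves ul ++ leaves ur by rewrite mem_cat h.
      by rewrite (negbTE (disjL hu h')) h.
    - have h' : x \in leaves ul ++ leaves ur by rewrite mem_cat h orbT.
      by rewrite (negbTE (disjL hu h')) h andbF.
    - by move: (disjR hu h); rewrite h mem_cat negb_or.
  have [o0 [o1 [o2 [[b0 a0] [b1 a1] [b2 a2]]]]] := split3 p0 op hap h0 h1 h2 h10 h2e hst.
  have p3 : 0 < p * 3 by rewrite muln_gt0 p0.
  apply: weakL_combine => //.
  - exact: (IH ul sz1 hinul hul' o0 (p*3) p3 b0 a0).
  - exact: (IH ur sz2 hinur hur' o1 (p*3) p3 b1 a1).
  - exact: (IH r szr hinr hur o2 (p*3) p3 b2 a2).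
  - apply: wbF; apply: (fav_lemma p0 hap hst h0 h1 huu); by left.
  - move=> [_ hS]; have hs := hS _ hvT.
    apply: (weak_not_strong p0 hap hst) => i j hc.
    have := hs _ _ hc; case: hc => [_ hi hj _].
    rewrite !(proj2 (proj2 (cls_spec _ _ _))) -!negb_or -!mem_cat.
    by case: (X i \in _); case: (X j \in _).
- case: r hsz hin hu hap hw hinr hur gr szr hwT hvT => // ul ur hsz hin hu hap hw hinr hur gr szr hwT hvT.
  have huu := hur.
  have hul' : uniq (leaves ul) by move: hur; rewrite /= cat_uniq => /and3P[].
  have hur' : uniq (leaves ur) by move: hur; rewrite /= cat_uniq => /and3P[].
  have hinul : forall v, List.In v (inner ul) -> List.In v (inner T).
    by move=> v hv; apply: hinr; right; apply: List.in_or_app; left.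
  have hinur : forall v, List.In v (inner ur) -> List.In v (inner T).
    by move=> v hv; apply: hinr; right; apply: List.in_or_app; right.
  have g1 := leaves_gt0 ul; have g2 := leaves_gt0 ur.
  have sz1 : size (leaves ul) <= n by move: szr; rewrite /= size_cat; move: g1 g2; clear; lia.
  have sz2 : size (leaves ur) <= n by move: szr; rewrite /= size_cat; move: g1 g2; clear; lia.
  have hst : forall i j, consec (leaves (Node l (Node ul ur))) X i j ->
      cls (leaves ur) (leaves ul) (X j) = (cls (leaves ur) (leaves ul) (X i)).+1 %% 3 := hw.
  have h0 : forall x, x \in leaves ur -> x \in leaves (Node l (Node ul ur)).
    by move=> x hx; rewrite /= !mem_cat hx !orbT.
  have h1 : forall x, x \in leaves ul -> x \in leaves (Node l (Node ul ur)).
    by move=> x hx; rewrite /= !mem_cat hx !orbT.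
  have h2 : forall x, x \in leaves l -> x \in leaves (Node l (Node ul ur)).
    by move=> x hx; rewrite /= !mem_cat hx.
  have h10 : forall x, x \in leaves ul -> x \notin leaves ur by move=> x; exact: disjL.
  have h2e : forall x, x \in leaves (Node l (Node ul ur)) ->
      (x \in leaves l) = (x \notin leaves ur) && (x \notin leaves ul).
    move=> x; rewrite /= !mem_cat => /orP[h|/orP[h|h]].
    - by move: (disjL hu h); rewrite h mem_cat negb_or andbC.
    - have h' : x \in leaves ul ++ leaves ur by rewrite mem_cat h.
      by rewrite (negbTE (disjR hu h')) h andbF.
    - have h' : x \in leaves ul ++ leaves ur by rewrite mem_cat h orbT.
      by rewrite (negbTE (disjR hu h')) h.
  have [o0 [o1 [o2 [[b0 a0] [b1 a1] [b2 a2]]]]] := split3 p0 op hap h0 h1 h2 h10 h2e hst.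
  have p3 : 0 < p * 3 by rewrite muln_gt0 p0.
  apply: weakR_combine => //.
  - exact: (IH l szl hinl hul o2 (p*3) p3 b2 a2).
  - exact: (IH ul sz1 hinul hul' o1 (p*3) p3 b1 a1).
  - exact: (IH ur sz2 hinur hur' o0 (p*3) p3 b0 a0).
  - apply: wbF; apply: (fav_lemma p0 hap hst h0 h1 huu); by right.
  - move=> [_ hS]; have hs := hS _ hvT.
    apply: (weak_not_strong p0 hap hst) => i j hc.
    have := hs _ _ hc; case: hc => [_ hi hj _].
    rewrite !(proj2 (proj2 (cls_spec _ _ _))) -(h2e _ hi) -(h2e _ hj).
    by case: (X i \in _); case: (X j \in _).
Qed.

Lemma occ X u o P : 0 < P -> o < P -> APs X [:: u] o P -> occurs_once_every X u P.
Proof.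
move=> P0 oP hA i.
have e : forall k, (X k == u) = (k %% P == o).
  move=> k; apply/idP/idP.
  - move=> hk; have [j ->] := (hA k).1 (ltac:(by rewrite inE)).
    by rewrite addnC modnMDl modn_small.
  - move/eqP=> hk.
    have : X k \in [:: u].
      by apply (hA k).2; exists (k %/ P); rewrite {1}(divn_eq k P) hk addnC.
    by rewrite inE.
rewrite (eq_count e); clear e hA.
elim: i => [|i IH].
  rewrite (@eq_in_count _ _ (pred1 o)); last first.
    by move=> k; rewrite mem_iota add0n => /andP[_ hk]; rewrite /= modn_small.
  by rewrite count_uniq_mem ?iota_uniq // mem_iota add0n oP.
case: P P0 oP IH => // P' _ oP IH.
rewrite /= in IH.
have -> : iota i.+1 P'.+1 = iota i.+1 P' ++ [:: i.+1 + P'] by rewrite -(addn1 P') iotaD.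
rewrite count_cat /=.
have -> : (i.+1 + P') %% P'.+1 = i %% P'.+1 by rewrite addSnnS modnDr.
by rewrite addn0 addnC.
Qed.

Lemma dvd_max (s : seq nat) (F : nat -> nat) q m :
  (forall u, u \in s -> q ^ F u %| m) -> q ^ (\max_(u <- s) F u) %| m.
Proof.
move=> h; rewrite big_seq; apply: (big_ind (fun n => q ^ n %| m)).
- by rewrite expn0 dvd1n.
- by move=> x y hx hy; rewrite /maxn; case: ifP.
- exact: h.
Qed.

Unset Implicit Arguments.

Theorem lemma1 (T : bst) (X : qseq) :
  is_bst T -> mixed_stable T X ->
  exists a b : nat -> nat,
    [/\ forall u, u \in leaves T -> occurs_once_every X u (2 ^ a u * 3 ^ b u),
        atomic_length X (2 ^ (\max_(u <- leaves T) a u) * 3 ^ (\max_(u <- leaves T) b u)),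
        strongly_stable T X -> forall u, u \in leaves T -> b u = 0
      & weakly_stable T X -> forall u, u \in leaves T -> a u = 0].
Proof.
move=> hbst [hq hms].
have huT : uniq (leaves T) := sorted_uniq ltn_trans ltnn hbst.
have hroot : APs X (leaves T) 0 1.
  by move=> i; split => [_|_]; [exists i; rewrite muln1 | apply: hq].
have [hcnt hleaf] := @rec X T hms (size (leaves T)) T (leqnn _) (fun v h => h) huT 0 1 isT isT hroot.
pose Pr u (abo : nat * nat * nat) := u \in leaves T ->
  [/\ abo.2 < 2 ^ abo.1.1 * 3 ^ abo.1.2, APs X [:: u] abo.2 (2 ^ abo.1.1 * 3 ^ abo.1.2),
      (strongly_stable T X -> abo.1.2 = 0) &
      (size (inner T) = (count (wb X) (inner T)).*2 -> abo.1.1 = 0)].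
have ex : forall u, exists abo, Pr u abo.
  move=> u; case: (boolP (u \in leaves T)) => hu.
    have [a [b [o' [h1 h2 h3 h4]]]] := hleaf u hu.
    by exists (a, b, o') => _; rewrite -[2 ^ a * 3 ^ b]mul1n.
  by exists (0, 0, 0) => hu'; rewrite hu' in hu.
pose f u := proj1_sig (constructive_indefinite_description _ (ex u)).
have hf : forall u, Pr u (f u) := fun u => proj2_sig (constructive_indefinite_description _ (ex u)).
exists (fun u => (f u).1.1), (fun u => (f u).1.2).
set A := \max_(u <- leaves T) (f u).1.1.
set B := \max_(u <- leaves T) (f u).1.2.
have Pu0 u : 0 < 2 ^ (f u).1.1 * 3 ^ (f u).1.2 by rewrite muln_gt0 !expn_gt0.
split.
- move=> u hu; have [h1 h2 _ _] := hf u hu; exact: occ (Pu0 u) h1 h2.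
- have dL : forall u, u \in leaves T -> 2 ^ (f u).1.1 * 3 ^ (f u).1.2 %| 2 ^ A * 3 ^ B.
    move=> u hu; apply: dvdn_mul; apply: dvdn_exp2l; exact: (leq_bigmax_seq _ hu).
  have L0 : 0 < 2 ^ A * 3 ^ B by rewrite muln_gt0 !expn_gt0.
  split.
    split => // i.
    have hu := hq i; have [_ h2 _ _] := hf _ hu.
    have [k ek] := (h2 i).1 (mem_head _ _).
    have : X (i + 2 ^ A * 3 ^ B) \in [:: X i].
      apply (h2 _).2; exists (k + (2 ^ A * 3 ^ B) %/ (2 ^ (f (X i)).1.1 * 3 ^ (f (X i)).1.2)).
      by rewrite mulnDl divnK ?dL // addnA -ek.
    by rewrite inE => /eqP.
  move=> m [m0 hm].
  have dm : forall u, u \in leaves T -> 2 ^ (f u).1.1 * 3 ^ (f u).1.2 %| m.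
    move=> u hu; have [_ h2 _ _] := hf u hu.
    have [o' [k ek]] : exists o' k, o' + m = o' + k * (2 ^ (f u).1.1 * 3 ^ (f u).1.2).
      exists (f u).2; apply: (h2 _).1; rewrite hm; apply: (h2 _).2; exists 0; by rewrite addn0.
    have -> : m = k * (2 ^ (f u).1.1 * 3 ^ (f u).1.2) by move: ek; clear; lia.
    exact: dvdn_mull.
  apply: dvdn_leq => //; rewrite Gauss_dvd; last by apply: coprimeXl; apply: coprimeXr.
  apply/andP; split.
  + apply: dvd_max => u hu; apply: dvdn_trans (dm u hu); exact: dvdn_mulr.
  + apply: dvd_max => u hu; apply: dvdn_trans (dm u hu); exact: dvdn_mull.
- by move=> hS u hu; have [_ _ h3 _] := hf u hu; exact: h3.
- move=> [_ [n [[msk [hsz hnth hc]] hn2]]] u hu; have [_ _ _ h4] := hf u hu; apply: h4.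
  have -> : count (wb X) (inner T) = n.
    rewrite -hc.
    have -> : msk = map (wb X) (inner T).
      apply: (@eq_from_nth _ false); first by rewrite size_map.
      move=> i hi; rewrite (nth_map (Leaf 0)) -?hsz //.
      apply/idP/idP => h; [apply: wbT; exact/(hnth i hi) | apply/(hnth i hi); exact: wbP].
    by rewrite count_map; apply: eq_count.
  by rewrite hn2.
Qed.
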